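(* Let $m,n\geq2$ and let $\mathbf p\in\mathbb R^m$, $\mathbf q\in\mathbb R^n$ be probability vectors with all entries strictly positive. If $P\in\mathcal C(\mathbf p,\mathbf q)$ is local optimal, then $m+n-\kappa(\mathbf p,\mathbf q)\leq|V(P)|\leq m+n-1$.
   Context: $\mathcal C(\mathbf p,\mathbf q)$: nonnegative $m\times n$ matrices $P=(p_{i,j})$ with row sums $p_i$, column sums $q_j$. $V(P)=\{(i,j):p_{i,j}\neq0\}$. $H(A)=-\sum a_{i,j}\log a_{i,j}$ ($0\log0=0$). Structure constant: for $\sigma\in\Sigma_m$ let $F_{\sigma\mathbf p}(i)=\sum_{k\le i}p_{\sigma(k)}$; $\kappa(\mathbf p,\mathbf q)=\max_{(\sigma,\pi)\in\Sigma_m\times\Sigma_n}|\{F_{\sigma\mathbf p}(i):1\le i<m\}\cap\{F_{\pi\mathbf q}(j):1\le j<n\}|+1$. Moves on $P$ (each yields $P'\in\mathcal C(\mathbf p,\mathbf q)$ by replacing the chosen submatrix $A$ by $A'$): (M1) choose distinct rows $i_1,i_2$ and distinct columns $j_1,j_2$, $a_{s,t}=p_{i_s,j_t}$; if $\max(a_{1,1},a_{2,2})\ge\max(a_{1,2},a_{2,1})$, put $b=\min(a_{1,2},a_{2,1})$, $a'_{s,s}=a_{s,s}+b$, $a'_{1,2}=a_{1,2}-b$, $a'_{2,1}=a_{2,1}-b$. (M2) same replacement, allowed when $a_{1,1}+a_{1,2}\ge a_{2,1}+a_{2,2}$, $a_{1,1}+a_{2,1}\ge a_{1,2}+a_{2,2}$,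 $a_{1,2}\ge a_{2,1}$. (M3) distinct rows $i_1,i_2$, distinct columns $j_1,\dots,j_r$ ($r\ge2$), $a_{s,k}=p_{i_s,j_k}$, allowed when $a_{2,k}=0$ for $k\ge2$ and $\sum_{k\ge2}a_{1,k}\le a_{2,1}\le\sum_{k\ge1}a_{1,k}$; replace by $a'_{1,1}=\sum_ka_{1,k}$, $a'_{1,k}=0$, $a'_{2,1}=a_{2,1}-\sum_{k\ge2}a_{1,k}$, $a'_{2,k}=a_{1,k}$ ($k\ge2$); moves may also be applied with rows and columns exchanged. $P$ is local optimal if no such move produces $P'$ with $H(P')<H(P)$. *)

(* Defs.v *)
From HB Require Import structures.
From mathcomp Require Import all_boot all_order all_algebra all_fingroup.
From mathcomp Require Import reals exp.
Set Implicit Arguments. Unset Strict Implicit. Unset Printing Implicit Defensive.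
Import Order.TTheory GRing.Theory Num.Theory.
Local Open Scope ring_scope.

Section Defs.
Variable R : realType.

Definition pos_prob_vec (k : nat) (p : 'I_k -> R) : Prop :=
  (forall i, 0 < p i) /\ \sum_(i < k) p i = 1.

Definition coupling (m n : nat) (p : 'I_m -> R) (q : 'I_n -> R)
  (P : 'M[R]_(m, n)) : Prop :=
  (forall i j, 0 <= P i j) /\
  (forall i, \sum_(j < n) P i j = p i) /\
  (forall j, \sum_(i < m) P i j = q j).

Definition supp (m n : nat) (P : 'M[R]_(m, n)) : {set 'I_m * 'I_n} :=
  [set ij | P ij.1 ij.2 != 0].

Definition xlnx (x : R) : R := if x == 0 then 0 else x * ln x.

Definition entropy (m n : nat) (A : 'M[R]_(m, n)) : R :=
  - \sum_(i < m) \sum_(j < n) xlnx (A i j).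

(* partial sums F_{sigma p}(i) = sum_{k <= i} p_{sigma(k)}, 1 <= i < m
   (0-indexed: sum over k < i for i = 1..m-1) *)
Definition partial_sums (m : nat) (p : 'I_m -> R) (s : 'S_m) : seq R :=
  [seq \sum_(k < m | (k < i)%N) p (s k) | i <- iota 1 m.-1].

Definition kappa (m n : nat) (p : 'I_m -> R) (q : 'I_n -> R) : nat :=
  (\max_(s : 'S_m) \max_(t : 'S_n)
     size (undup [seq x <- partial_sums p s | x \in partial_sums q t]))%N + 1.

Definition move2x2 (m n : nat) (P : 'M[R]_(m, n)) (i1 i2 : 'I_m) (j1 j2 : 'I_n)
  : 'M[R]_(m, n) :=
  let b := Num.min (P i1 j2) (P i2 j1) in
  \matrix_(i, j)
    if (i == i1) && (j == j1) then P i j + b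
    else if (i == i2) && (j == j2) then P i j + b
    else if (i == i1) && (j == j2) then P i j - b
    else if (i == i2) && (j == j1) then P i j - b
    else P i j.

Definition moveM1 (m n : nat) (P P' : 'M[R]_(m, n)) : Prop :=
  exists (i1 i2 : 'I_m) (j1 j2 : 'I_n), i1 != i2 /\ j1 != j2 /\
    Num.max (P i1 j2) (P i2 j1) <= Num.max (P i1 j1) (P i2 j2) /\
    P' = move2x2 P i1 i2 j1 j2.

Definition moveM2 (m n : nat) (P P' : 'M[R]_(m, n)) : Prop :=
  exists (i1 i2 : 'I_m) (j1 j2 : 'I_n), i1 != i2 /\ j1 != j2 /\
    P i2 j1 + P i2 j2 <= P i1 j1 + P i1 j2 /\
    P i1 j2 + P i2 j2 <= P i1 j1 + P i2 j1 /\
    P i2 j1 <= P i1 j2 /\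
    P' = move2x2 P i1 i2 j1 j2.

(* move (M3): rows i1,i2, columns J 0 (= j_1), J 1, ..., J r.+1 (r+2 >= 2) *)
Definition moveM3 (m n : nat) (P P' : 'M[R]_(m, n)) : Prop :=
  exists (i1 i2 : 'I_m) (r : nat) (J : 'I_r.+2 -> 'I_n),
    i1 != i2 /\ injective J /\
    (forall k : 'I_r.+2, k != ord0 -> P i2 (J k) = 0) /\
    let S1 := \sum_(k < r.+2) P i1 (J k) in
    let S2 := \sum_(k < r.+2 | k != ord0) P i1 (J k) in
    S2 <= P i2 (J ord0) /\ P i2 (J ord0) <= S1 /\
    P' = \matrix_(i, j)
           if i == i1 then
             (if j == J ord0 then S1
              else if j \in codom J then 0 else P i j)
           else if i == i2 then
             (if j == J ord0 then P i2 (J ord0) - S2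
              else if j \in codom J then P i1 j else P i j)
           else P i j.

Definition move_rows (m n : nat) (P P' : 'M[R]_(m, n)) : Prop :=
  moveM1 P P' \/ moveM2 P P' \/ moveM3 P P'.

Definition move (m n : nat) (P P' : 'M[R]_(m, n)) : Prop :=
  move_rows P P' \/ move_rows P^T P'^T.

Definition local_optimal (m n : nat) (P : 'M[R]_(m, n)) : Prop :=
  forall P' : 'M[R]_(m, n), move P P' -> ~ (entropy P' < entropy P).

End Defs.

(* Main.v *)
Require Import Defs.
From HB Require Import structures.
From mathcomp Require Import all_boot all_order all_algebra all_fingroup.
From mathcomp Require Import reals exp.
From mathcomp Require Import ring lra zify.
Import Order.TTheory GRing.Theory Num.Theory.
Local Open Scope ring_scope.


Section Ana.
Variable R : realType.
Implicit Types x y z w a c t u v : R.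

Lemma ln_lt_sub1 x : 0 < x -> x != 1 -> ln x < x - 1.
Proof.
move=> x0 x1; rewrite -ltr_expR lnK ?posrE //.
have := @expR_gt1Dx R (x - 1); rewrite subr_eq0 => /(_ x1).
by rewrite addrC subrK.
Qed.

Lemma ln_le_sub1 x : 0 < x -> ln x <= x - 1.
Proof.
move=> x0; have [->|x1] := eqVneq x 1; first by rewrite ln1 subrr.
exact/ltW/ln_lt_sub1.
Qed.

Lemma lnB_lt u v : 0 < u -> 0 < v -> u != v -> v * (ln u - ln v) < u - v.
Proof.
move=> u0 v0 uv; rewrite -ln_div ?posrE //.
have h : ln (u / v) < u / v - 1.
  apply: ln_lt_sub1; first exact: divr_gt0.
  by apply: contra uv => /eqP h; apply/eqP; rewrite -[u](divfK (lt0r_neq0 v0)) h mul1r.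
have -> : u - v = v * (u / v - 1) by field; exact: lt0r_neq0.
by rewrite ltr_pM2l.
Qed.

Lemma lnB_le u v : 0 < u -> 0 < v -> v * (ln u - ln v) <= u - v.
Proof.
move=> u0 v0; have [->|uv] := eqVneq u v; first by rewrite !subrr mulr0.
exact/ltW/lnB_lt.
Qed.

Lemma xlnx_pos x : 0 < x -> xlnx x = x * ln x.
Proof. by move=> x0; rewrite /xlnx gt_eqF. Qed.

Lemma xlnx0 : xlnx (0 : R) = 0.
Proof. by rewrite /xlnx eqxx. Qed.

Lemma F1 a c t : 0 < t -> t <= c -> c <= a ->
  xlnx a + xlnx c < xlnx (a + t) + xlnx (c - t).
Proof.
move=> t0 tc ca.
have c0 : 0 < c by apply: lt_le_trans tc.
have a0 : 0 < a by apply: lt_le_trans ca.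
have at0 : 0 < a + t by apply: addr_gt0.
rewrite (xlnx_pos _ a0) (xlnx_pos _ c0) (xlnx_pos _ at0).
have h1' : (a + t) * (ln a - ln (a + t)) < - t.
  have ne : a != a + t by rewrite eq_sym -subr_eq0 addrC addKr gt_eqF.
  have := lnB_lt _ _ a0 at0 ne; lra.
have hl : ln c <= ln a by rewrite ler_ln ?posrE.
have hl' : t * ln c <= t * ln a by rewrite ler_pM2l.
have [ct|ct] := eqVneq c t.
  rewrite ct subrr xlnx0 addr0.
  rewrite ct in hl'; nra.
have ct0 : 0 < c - t by rewrite subr_gt0 lt_neqAle eq_sym ct tc.
rewrite (xlnx_pos _ ct0).
have h2 := lnB_le _ _ c0 ct0.
nra.
Qed.

Lemma F2 w y : 0 <= w -> 0 <= y -> xlnx w + xlnx y <= xlnx (w + y).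
Proof.
rewrite le0r => /orP[/eqP->|w0]; first by rewrite xlnx0 !add0r.
rewrite le0r => /orP[/eqP->|y0]; first by rewrite xlnx0 !addr0.
have wy : 0 < w + y by apply: addr_gt0.
rewrite !xlnx_pos //.
have h1 : ln w <= ln (w + y) by rewrite ler_ln ?posrE // lerDl ltW.
have h2 : ln y <= ln (w + y) by rewrite ler_ln ?posrE // lerDr ltW.
nra.
Qed.

Lemma key4 x y z w : 0 < y -> 0 < z -> 0 <= w -> y <= x -> z <= x ->
  xlnx x + xlnx w + xlnx y + xlnx z <
  xlnx (x + Num.min y z) + xlnx (w + Num.min y z) +
  xlnx (y - Num.min y z) + xlnx (z - Num.min y z).
Proof.
move=> y0 z0 w0 yx zx.
have [yz|zy] := leP y z.
  rewrite subrr xlnx0.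
  have := F1 _ _ _ y0 yz zx; have := F2 _ _ w0 (ltW y0); lra.
rewrite subrr xlnx0.
have := F1 _ _ _ z0 (ltW zy) yx; have := F2 _ _ w0 (ltW z0); lra.
Qed.
End Ana.


Section Ent.
Variable R : realType.

Lemma split4 (T : finType) (F : T -> R) a b c d :
  a != b -> a != c -> a != d -> b != c -> b != d -> c != d ->
  \sum_x F x = F a + F b + F c + F d +
     \sum_(x | [&& x != a, x != b, x != c & x != d]) F x.
Proof.
move=> ab ac ad bc bd cd.
rewrite (bigD1 a) //= (bigD1 b) /=; last by rewrite eq_sym.
rewrite (bigD1 c) /=; last by rewrite eq_sym ac eq_sym bc.
rewrite (bigD1 d) /=; last by rewrite eq_sym ad eq_sym bd eq_sym cd.
rewrite !addrA; congr (_ + _).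
by apply: eq_bigl => x; rewrite !andbA.
Qed.

Lemma entropy_move m n (P : 'M[R]_(m, n)) i1 i2 j1 j2 :
  i1 != i2 -> j1 != j2 ->
  0 < P i1 j2 -> 0 < P i2 j1 -> 0 <= P i2 j2 ->
  P i1 j2 <= P i1 j1 -> P i2 j1 <= P i1 j1 ->
  entropy (move2x2 P i1 i2 j1 j2) < entropy P.
Proof.
move=> ni nj y0 z0 w0 yx zx.
rewrite /entropy ltrN2 !pair_big /=.
have Hab : (i1,j1) != (i2,j2) by rewrite xpair_eqE negb_and ni.
have Hac : (i1,j1) != (i1,j2) by rewrite xpair_eqE negb_and nj orbT.
have Had : (i1,j1) != (i2,j1) by rewrite xpair_eqE negb_and ni.
have Hbc : (i2,j2) != (i1,j2) by rewrite xpair_eqE negb_and eq_sym ni.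
have Hbd : (i2,j2) != (i2,j1) by rewrite xpair_eqE negb_and eq_sym nj orbT.
have Hcd : (i1,j2) != (i2,j1) by rewrite xpair_eqE negb_and ni.
set F := fun x : 'I_m * 'I_n => xlnx (P x.1 x.2).
set F' := fun x : 'I_m * 'I_n => xlnx (move2x2 P i1 i2 j1 j2 x.1 x.2).
rewrite (split4 _ F _ _ _ _ Hab Hac Had Hbc Hbd Hcd) (split4 _ F' _ _ _ _ Hab Hac Had Hbc Hbd Hcd).
have -> : \sum_(x | [&& x != (i1, j1), x != (i2, j2), x != (i1, j2) & x != (i2, j1)]) F' x =
          \sum_(x | [&& x != (i1, j1), x != (i2, j2), x != (i1, j2) & x != (i2, j1)]) F x.
  apply: eq_bigr => -[i j] /and4P[h1 h2 h3 h4]; rewrite /F /F' /= mxE.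
  move: h1 h2 h3 h4; rewrite !xpair_eqE => /negbTE-> /negbTE-> /negbTE-> /negbTE->.
  by [].
rewrite ltrD2r /F /F' /= !mxE !eqxx /= (negbTE ni) (negbTE nj) eq_sym (negbTE ni) /=.
idtac.
by rewrite eq_sym (negbTE nj); apply: key4.
Qed.
End Ent.


Section Forest.
Variable R : realType.
Variables (m n : nat) (P : 'M[R]_(m, n)).

Definition good (E : {set 'I_m * 'I_n}) (e : 'I_m * 'I_n) : bool :=
 [exists j', [&& j' != e.2, (e.1, j') \in E & P e.1 j' <= P e.1 e.2]] &&
 [exists i', [&& i' != e.1, (i', e.2) \in E & P i' e.2 <= P e.1 e.2]].

Lemma good_mono (E E' : {set 'I_m * 'I_n}) e : E' \subset E -> good E' e -> good E e.
Proof.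
move=> sub /andP[/existsP[j /and3P[h1 h2 h3]] /existsP[i /and3P[g1 g2 g3]]].
apply/andP; split; [apply/existsP; exists j|apply/existsP; exists i];
  rewrite ?h1 ?h3 ?g1 ?g3 ?(subsetP sub _ h2) ?(subsetP sub _ g2) //.
Qed.

Lemma forest_aux k : forall E : {set 'I_m * 'I_n}, (#|E| <= k)%N -> E != set0 ->
  (forall e, e \in E -> ~~ good E e) ->
  (#|E| < #|[set e.1 | e in E]| + #|[set e.2 | e in E]|)%N.
Proof.
elim: k => [|k IH] E.
  by rewrite leqn0 cards_eq0 => ->.
move=> Ek En Eng.
have [e0 e0E] := set0Pn _ En.
case: (@arg_maxP _ _ _ e0 (mem E) (fun e => P e.1 e.2) e0E) => e eE emax.
have {}eE : e \in E := eE.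
have {}emax : forall e', e' \in E -> P e'.1 e'.2 <= P e.1 e.2 by [].
have := Eng _ eE; rewrite /good negb_and => hng.
set E' := E :\ e.
have cE : #|E| = #|E'|.+1 by rewrite (cardsD1 e E) eE.
have sE' : E' \subset E by apply: subsetDl.
have E'ng : forall e', e' \in E' -> ~~ good E' e'.
  by move=> e' /(subsetP sE') /Eng; apply: contra; apply: good_mono.
have r1 : e.1 \in [set x.1 | x in E] by apply/imsetP; exists e.
have c1 : e.2 \in [set x.2 | x in E] by apply/imsetP; exists e.
have rsub : [set x.1 | x in E'] \subset [set x.1 | x in E] by apply: imsetS.
have csub : [set x.2 | x in E'] \subset [set x.2 | x in E] by apply: imsetS.
have [E'0|E'n] := eqVneq E' set0.
  rewrite cE E'0 cards0.
  have := card_gt0P; move=> _.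
  have h1 : (0 < #|[set x.1 | x in E]|)%N by apply/card_gt0P; exists e.1.
  have h2 : (0 < #|[set x.2 | x in E]|)%N by apply/card_gt0P; exists e.2.
  lia.
have E'k : (#|E'| <= k)%N by rewrite -ltnS -cE.
have IH' := IH E' E'k E'n E'ng.
case/orP: hng => [/existsPn hr | /existsPn hc].
- (* row e.1 has only e *)
  have rsub' : [set x.1 | x in E'] \subset [set x.1 | x in E] :\ e.1.
    apply/subsetP => r /imsetP[x xE' ->]; rewrite in_setD1.
    have xE : x \in E := subsetP sE' _ xE'.
    rewrite (subsetP rsub) ?andbT; last by apply/imsetP; exists x.
    apply/eqP => ex1; move: xE'; rewrite in_setD1 => /andP[xne _].
    have h := emax x xE; rewrite ex1 in h.
    have xE1 : (e.1, x.2) \in E by rewrite -ex1 -surjective_pairing.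
    have := hr x.2; rewrite xE1 h /= andbT negbK => /eqP ex2.
    by move: xne; rewrite [x]surjective_pairing ex1 ex2 -surjective_pairing eqxx.
  have := subset_leq_card rsub'; rewrite (cardsD1 e.1 [set x.1 | x in E]) r1.
  have := subset_leq_card csub; lia.
- have csub' : [set x.2 | x in E'] \subset [set x.2 | x in E] :\ e.2.
    apply/subsetP => r /imsetP[x xE' ->]; rewrite in_setD1.
    have xE : x \in E := subsetP sE' _ xE'.
    rewrite (subsetP csub) ?andbT; last by apply/imsetP; exists x.
    apply/eqP => ex2; move: xE'; rewrite in_setD1 => /andP[xne _].
    have h := emax x xE; rewrite ex2 in h.
    have xE1 : (x.1, e.2) \in E by rewrite -ex2 -surjective_pairing.
    have := hc x.1; rewrite xE1 h /= andbT negbK => /eqP ex1.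
    by move: xne; rewrite [x]surjective_pairing ex1 ex2 -surjective_pairing eqxx.
  have := subset_leq_card csub'; rewrite (cardsD1 e.2 [set x.2 | x in E]) c1.
  have := subset_leq_card rsub; lia.
Qed.
End Forest.


Lemma take_count_sorted (T : eqType) (key : T -> nat) K (s : seq T) :
  sorted (fun a b => (key a <= key b)%N) s ->
  take (count (fun x => (key x < K)%N) s) s = filter (fun x => (key x < K)%N) s.
Proof.
elim: s => [//|x l IH] /= srt.
have srtl : sorted (fun a b => (key a <= key b)%N) l by apply: (path_sorted srt).
have allx : all (fun y => (key x <= key y)%N) l.
  by apply: (order_path_min _ srt) => a b c; apply: leq_trans.
case: ifP => hx.
  by rewrite add1n /= IH.
have c0 : count (fun x0 => (key x0 < K)%N) l = 0%N.
  apply/eqP; rewrite -leqn0 leqNgt -has_count; apply/hasP => -[y yl hy].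
  move/allP: allx => /(_ y yl) hxy; move: hx; rewrite (leq_ltn_trans hxy hy) //.
rewrite c0 /=; symmetry; apply/eqP; rewrite -size_eq0 size_filter c0 //.
Qed.

Section Sort.
Variable R : realType.

Lemma sort_perm m (x0 : 'I_m) (key : 'I_m -> nat) : exists s : 'S_m,
  forall K (w : 'I_m -> R),
  \sum_(k < m | (k < count (fun i => key i < K) (enum 'I_m))%N) w (s k) =
  \sum_(i | (key i < K)%N) w i.
Proof.
set leT := fun a b : 'I_m => (key a <= key b)%N.
set lst := sort leT (enum 'I_m).
have pl : perm_eq lst (enum 'I_m) by rewrite perm_sort.
have ul : uniq lst by rewrite sort_uniq enum_uniq.
have sl : size lst = m by rewrite size_sort size_enum_ord.
have srt : sorted leT lst.
  by apply: sort_sorted => a b; rewrite /leT leq_total.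
have f_inj : injective (fun k : 'I_m => nth x0 lst k).
  move=> a b /eqP; rewrite nth_uniq ?sl // => /eqP; apply: val_inj.
exists (perm f_inj) => K w.
set N := count _ _.
have NK : N = count (fun i => key i < K)%N lst by move/seq.permP: pl => ->.
have Nm : (N <= m)%N by rewrite NK; apply: leq_trans (count_size _ _) _; rewrite sl.
rewrite (eq_bigr (fun k : 'I_m => w (nth x0 lst k))); last by move=> k _; rewrite permE.
rewrite -(big_ord_widen m (fun k => w (nth x0 lst k)) Nm).
have -> : \sum_(k < N) w (nth x0 lst k) = \sum_(y <- take N lst) w y.
  rewrite (big_nth x0) size_takel ?sl // big_mkord.
  by apply: eq_bigr => k _; rewrite nth_take.
rewrite NK take_count_sorted // big_filter (perm_big _ pl).
by rewrite big_enum_cond; apply: eq_bigl => i.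
Qed.
End Sort.


Lemma labeling m n : forall k (E : {set 'I_m * 'I_n}), (#|E| <= k)%N ->
  exists g : 'I_m + 'I_n -> 'I_m + 'I_n,
    (forall e, e \in E -> g (inl e.1) = g (inr e.2)) /\
    (m + n <= #|E| + #|g @: [set: 'I_m + 'I_n]|)%N.
Proof.
elim => [|k IH] E.
  rewrite leqn0 cards_eq0 => /eqP ->; exists id; split; first by move=> e; rewrite in_set0.
  rewrite cards0 add0n card_imset //= cardsT card_sum !card_ord //.
move=> Ek.
have [E0|En] := eqVneq E set0.
  by apply: (IH E); rewrite E0 cards0.
have [e eE] := set0Pn _ En.
have cE : #|E| = #|E :\ e|.+1 by rewrite (cardsD1 e E) eE.
have Ek' : (#|E :\ e| <= k)%N by rewrite -ltnS -cE.
have [g' [g'E g'c]] := IH (E :\ e) Ek'.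
set a := g' (inl e.1); set b := g' (inr e.2).
exists (fun x => if g' x == b then a else g' x); split.
  move=> e' e'E; have [->|ne] := eqVneq e' e.
    by rewrite eqxx /a; case: ifP.
  by rewrite g'E // in_setD1 ne.
have sub : g' @: [set: 'I_m + 'I_n] \subset
    b |: ((fun x => if g' x == b then a else g' x) @: [set: 'I_m + 'I_n]).
  apply/subsetP => y /imsetP[x _ ->]; rewrite in_setU1.
  case: (g' x =P b) => [//|hb] /=; apply/imsetP; exists x => //.
  by rewrite in_setT. by case: (g' x =P b).
have := subset_leq_card sub; rewrite cardsU1.
move: g'c; rewrite cE; case: (b \in _) => /=; lia.
Qed.


Section Lower.
Variable R : realType.

Lemma exists_nz (T : finType) (F : T -> R) : 0 < \sum_i F i -> exists i, F i != 0.
Proof.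
move=> h; apply/existsP; apply: contraLR h; rewrite negb_exists => /forallP h.
by rewrite big1 ?ltxx // => i _; apply/eqP; rewrite -[_ == _]negbK h.
Qed.

Lemma lower m n (i0 : 'I_m) (j0 : 'I_n) (p : 'I_m -> R) (q : 'I_n -> R) (P : 'M[R]_(m, n)) :
  pos_prob_vec p -> pos_prob_vec q -> coupling p q P ->
  (m + n - kappa p q <= #|supp P|)%N.
Proof.
move=> [pp _] [qp _] [P0 [Prow Pcol]].
have [g [gE gc]] := labeling _ _ _ (supp P) (leqnn _).
set L := g @: [set: 'I_m + 'I_n] in gc.
set c := #|L| in gc.
set ls := enum L.
pose key x := index (g x) ls.
have k1 : forall x, (key x < c)%N.
  by move=> x; rewrite /key /c cardE index_mem mem_enum; apply: imset_f; rewrite in_setT.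
have k2 : forall i j, P i j != 0 -> key (inl i) = key (inr j).
  by move=> i j h; rewrite /key (gE (i, j)) // in_set.
have k3 : forall k, (k < c)%N -> (exists i, key (inl i) = k) /\ (exists j, key (inr j) = k).
  move=> k kc.
  have kls : (k < size ls)%N by rewrite /ls -cardE.
  have lL : nth (g (inl i0)) ls k \in L by rewrite -mem_enum mem_nth.
  case/imsetP: lL => x _ hx.
  have kx : key x = k by rewrite /key -hx index_uniq ?enum_uniq.
  case: x hx kx => [i|j] hx kx.
    have [j hj] : exists j, P i j != 0 by apply: exists_nz; rewrite Prow.
    by split; [exists i | exists j; rewrite -(k2 _ _ hj)].
  have [i hi] : exists i, P i j != 0 by apply: exists_nz; rewrite Pcol.
  by split; [exists i; rewrite (k2 _ _ hi) | exists j].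
pose rkey i := key (inl i); pose ckey j := key (inr j).
have [s hs] := sort_perm R m i0 rkey.
have [t ht] := sort_perm R n j0 ckey.
pose W K := \sum_(i | (rkey i < K)%N) p i.
have WE : forall K, W K = \sum_(j | (ckey j < K)%N) q j.
  move=> K; rewrite /W big_mkcond [RHS]big_mkcond /=.
  rewrite (eq_bigr (fun i => \sum_j (if (rkey i < K)%N then P i j else 0))); last first.
    by move=> i _; case: ifP => _; rewrite ?Prow // big1.
  rewrite exchange_big /=; apply: eq_bigr => j _.
  rewrite (eq_bigr (fun i => if (ckey j < K)%N then P i j else 0)); last first.
    move=> i _; have [->|nz] := eqVneq (P i j) 0; first by rewrite !if_same.
    by rewrite /rkey /ckey (k2 _ _ nz).
  by case: ifP => _; rewrite ?Pcol // big1.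
have Wlt : forall K1 K2, (K1 < K2)%N -> (K1 < c)%N -> W K1 < W K2.
  move=> K1 K2 K12 K1c; rewrite /W [X in _ < X](bigID (fun i => (rkey i < K1)%N)) /=.
  have -> : \sum_(i < m | (rkey i < K2)%N && (rkey i < K1)%N) p i =
            \sum_(i < m | (rkey i < K1)%N) p i.
    by apply: eq_bigl => i; case h: (rkey i < K1)%N; rewrite ?andbF ?andbT // (ltn_trans h K12).
  rewrite ltrDl.
  have [[i1 hi1] _] := k3 _ K1c.
  rewrite (bigD1 i1) /=; last by rewrite /rkey hi1 K12 ltnn.
  apply: lt_le_trans (pp i1) _; rewrite lerDl sumr_ge0 // => i _; exact: ltW.
have inps : forall K, (0 < K)%N -> (K < c)%N ->
    (W K \in partial_sums p s) && (W K \in partial_sums q t).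
  move=> K K0 Kc.
  have c0 : (0 < c)%N by apply: leq_ltn_trans Kc.
  have [[ia hia] [ja hja]] := k3 0%N c0.
  have [[ib hib] [jb hjb]] := k3 K Kc.
  apply/andP; split.
  - set NK := count (fun i => rkey i < K)%N (enum 'I_m).
    have N1 : (0 < NK)%N.
      rewrite -has_count; apply/hasP; exists ia; first by rewrite mem_enum.
      by rewrite /= /rkey hia.
    have N2 : (NK < m)%N.
      have := count_predC (fun i => rkey i < K)%N (enum 'I_m); rewrite size_enum_ord.
      have : (0 < count (predC (fun i => rkey i < K)%N) (enum 'I_m))%N.
        rewrite -has_count; apply/hasP; exists ib; first by rewrite mem_enum.
        by rewrite /= /rkey hib ltnn.
      rewrite -/NK; lia.
    apply/mapP; exists NK; last by rewrite hs.
    rewrite mem_iota; lia.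
  - set NK := count (fun j => ckey j < K)%N (enum 'I_n).
    have N1 : (0 < NK)%N.
      rewrite -has_count; apply/hasP; exists ja; first by rewrite mem_enum.
      by rewrite /= /ckey hja.
    have N2 : (NK < n)%N.
      have := count_predC (fun j => ckey j < K)%N (enum 'I_n); rewrite size_enum_ord.
      have : (0 < count (predC (fun j => ckey j < K)%N) (enum 'I_n))%N.
        rewrite -has_count; apply/hasP; exists jb; first by rewrite mem_enum.
        by rewrite /= /ckey hjb ltnn.
      rewrite -/NK; lia.
    apply/mapP; exists NK; last by rewrite ht WE.
    rewrite mem_iota; lia.
set Ws := [seq W K | K <- iota 1 c.-1].
have uW : uniq Ws.
  rewrite map_inj_in_uniq ?iota_uniq // => K1 K2; rewrite !mem_iota => h1 h2 e.
  case: (ltngtP K1 K2) => // h.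
    by have := Wlt _ _ h ltac:(lia); rewrite e ltxx.
  by have := Wlt _ _ h ltac:(lia); rewrite e ltxx.
have sW : {subset Ws <= undup [seq x <- partial_sums p s | x \in partial_sums q t]}.
  move=> x /mapP[K KI ->]; rewrite mem_undup mem_filter; move: KI; rewrite mem_iota => KI.
  have /andP[-> ->] := inps K ltac:(lia) ltac:(lia); by [].
have := uniq_leq_size uW sW; rewrite size_map size_iota => hsz.
have kap : (c <= kappa p q)%N.
  rewrite /kappa.
  have := leq_trans hsz (leq_bigmax (F := fun t0 : 'S_n =>
      size (undup [seq x <- partial_sums p s | x \in partial_sums q t0])) t).
  move=> h; have := leq_trans h (leq_bigmax (F := fun s0 : 'S_m => \max_(t0 : 'S_n)
      size (undup [seq x <- partial_sums p s0 | x \in partial_sums q t0])) s).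
  move=> hh; rewrite addn1; apply: leq_trans (leqSpred c) _; by rewrite ltnS.
lia.
Qed.
End Lower.


Lemma upper (R : realType) m n (p : 'I_m -> R) (q : 'I_n -> R) (P : 'M[R]_(m, n)) :
  coupling p q P -> local_optimal P -> (#|supp P| <= m + n - 1)%N.
Proof.
move=> [P0 _] lo.
have ng : forall e, e \in supp P -> ~~ good R m n P (supp P) e.
  move=> [i j] eE; apply/negP => /andP[/existsP[j' /and3P[h1 h2 h3]] /existsP[i' /and3P[g1 g2 g3]]].
  move: eE h1 h2 h3 g1 g2 g3 => /=; rewrite !in_set /= => eE h1 h2 h3 g1 g2 g3.
  apply: (lo (move2x2 P i i' j j')).
    left; left; exists i, i', j, j'; split; first by rewrite eq_sym.
    split; first by rewrite eq_sym.
    split => //.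
    by rewrite ge_max !le_max h3 g3.
  apply: entropy_move; rewrite ?(eq_sym i) ?(eq_sym j) //.
  - by rewrite lt0r h2 P0.
  - by rewrite lt0r g2 P0.
have [E0|En] := eqVneq (supp P) set0; first by rewrite E0 cards0.
have := forest_aux R m n P _ _ (leqnn _) En ng.
have := max_card [set e.1 | e in supp P]; have := max_card [set e.2 | e in supp P].
rewrite !card_ord; lia.
Qed.

Theorem theorem2p2 (R : realType) (m n : nat) (p : 'I_m -> R) (q : 'I_n -> R)
  (P : 'M[R]_(m, n)) :
  (2 <= m)%N -> (2 <= n)%N ->
  pos_prob_vec p -> pos_prob_vec q ->
  coupling p q P -> local_optimal P ->
  (m + n - kappa p q <= #|supp P| <= m + n - 1)%N.
Proof.
move=> m2 n2 pp qq cp lo; apply/andP; split; last exact: (upper R m n p q P cp lo).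
have i0 : 'I_m by exists 0%N; lia.
have j0 : 'I_n by exists 0%N; lia.
exact: (lower R m n i0 j0 p q P pp qq cp).
Qed.
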